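(* For every split graph $G$, $\eta(G)\leq\chi(G)$, where $\chi(G)$ is the chromatic number of $G$.
   Context: All graphs are finite, simple and undirected. A graph is split if its vertex set can be partitioned into a clique and a stable set. For a vertex $v$, $N(v)$ is its set of neighbours. For a positive integer $k$, $[k]=\{1,\dots,k\}$. For a labeling $f:V(G)\to[k]$ and $S\subseteq V(G)$, $f(S)=\sum_{u\in S}f(u)$. A labeling $f:V(G)\to[k]$ is an additive $k$-coloring if $f(N(u))\neq f(N(v))$ for every edge $(u,v)$ of $G$. The additive chromatic number $\eta(G)$ is the least $k$ for which $G$ has an additive $k$-coloring. *)

(* Defs.v *)
From mathcomp Require Import all_boot.
Set Implicit Arguments. Unset Strict Implicit. Unset Printing Implicit Defensive.

Definition simple_graph (T : finType) (e : rel T) : Prop :=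
  symmetric e /\ irreflexive e.

Definition nbhd (T : finType) (e : rel T) (v : T) : {set T} := [set u | e v u].

Definition is_split (T : finType) (e : rel T) : Prop :=
  exists K S : {set T},
    [/\ K :&: S = set0, K :|: S = [set: T],
        {in K &, forall u v, u != v -> e u v} &
        {in S &, forall u v, ~~ e u v}].

Definition proper_coloring (T : finType) (e : rel T) (k : nat) (c : T -> 'I_k) : Prop :=
  forall u v, e u v -> c u != c v.

Definition colorable (T : finType) (e : rel T) (k : nat) : Prop :=
  exists c : T -> 'I_k, proper_coloring e c.

Lemma colorable_card (T : finType) (e : rel T) :
  irreflexive e -> exists k, colorable e k.
Proof.
move=> irr; exists #|T|; exists (@enum_rank T) => u v euv.
apply/negP => /eqP /enum_rank_inj huv; subst v; by rewrite irr in euv.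
Qed.

Definition lsum (T : finType) (f : T -> nat) (S : {set T}) : nat := \sum_(u in S) f u.

Definition additive_coloring (T : finType) (e : rel T) (k : nat) (f : T -> nat) : Prop :=
  (forall v, 1 <= f v <= k) /\
  (forall u v, e u v -> lsum f (nbhd e u) != lsum f (nbhd e v)).

Definition additive_colorable (T : finType) (e : rel T) (k : nat) : Prop :=
  exists f : T -> nat, additive_coloring e k f.

Definition is_chromatic_number (T : finType) (e : rel T) (k : nat) : Prop :=
  colorable e k /\ forall j, colorable e j -> k <= j.

(* eta(G) <= k: there exists an additive j-colouring for some j <= k
   (eta(G) is the least such j, so this says eta is defined and at most k). *)
Definition eta_le (T : finType) (e : rel T) (k : nat) : Prop :=
  exists2 j, j <= k & additive_colorable e j.

(* Main.v *)
Require Import Defs.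
From mathcomp Require Import all_boot.
From mathcomp Require Import zify.

Lemma clique_le (T : finType) (e : rel T) (A : {set T}) m :
  {in A &, forall u v, u != v -> e u v} -> colorable e m -> #|A| <= m.
Proof.
move=> HA [c Hc].
rewrite -(card_in_imset (f:=c)); last first.
  move=> u v uA vA cuv; apply/eqP; apply: contraT => neq.
  by move: (Hc u v (HA _ _ uA vA neq)); rewrite cuv eqxx.
by apply: leq_trans (max_card _) _; rewrite card_ord.
Qed.

Lemma modeq x y k a b : 0 < x <= k -> 0 < y <= k -> x + k * a = y + k * b -> x = y.
Proof.
move=> hx hy h.
case: (ltngtP a b) => hab.
- have : k * a.+1 <= k * b by rewrite leq_mul2l hab orbT.
  rewrite mulnS; lia.
- have : k * b.+1 <= k * a by rewrite leq_mul2l hab orbT.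
  rewrite mulnS; lia.
- subst; lia.
Qed.

Theorem mainTheorem10 (T : finType) (e : rel T) (k : nat) :
  simple_graph e -> is_split e -> is_chromatic_number e k -> eta_le e k.
Proof.
move=> [sym irr] [K [S [HI HU HK HS]]] [colk _].
exists k => //.
have KS : forall v, (v \in K) || (v \in S).
  move=> v; have : v \in K :|: S by rewrite HU inE.
  by rewrite inE.
have nKS : forall v, v \in K -> v \in S -> False.
  move=> v vK vS; have : v \in K :&: S by rewrite inE vK vS.
  by rewrite HI inE.
have Kk : #|K| <= k := @clique_le _ _ K k HK colk.
have k0 : forall v : T, 0 < k.
  by move=> v; case: colk => c _; have := ltn_ord (c v); lia.
pose f v := if v \in K then (index v (enum K)).+1 else k.
have fK : forall u, u \in K -> f u <= #|K|.
  move=> u uK; rewrite /f uK cardE index_mem mem_enum //.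
exists f; split.
  move=> v; rewrite /f; case: ifP => vK.
    by have := fK v vK; rewrite /f vK; lia.
  by have := k0 v; lia.
pose F := \sum_(i in K) f i.
have sigK : forall u, u \in K -> lsum f (nbhd e u) + f u =
    F + k * \sum_(i in nbhd e u | i \notin K) 1.
  move=> u uK; rewrite /lsum (bigID (fun v => v \in K)) /= /F [in RHS](bigD1 u) //=.
  have -> : \sum_(i in nbhd e u | i \in K) f i = \sum_(i in K | i != u) f i.
    apply: eq_bigl => i; rewrite inE.
    case iK: (i \in K); rewrite ?andbF ?andbT //.
    case: (eqVneq i u) => [->|neq]; first by rewrite irr.
    by rewrite (HK u i uK iK) // eq_sym.
  have -> : \sum_(i in nbhd e u | i \notin K) f i =
            k * \sum_(i in nbhd e u | i \notin K) 1.
    rewrite big_distrr /=; apply: eq_bigr => i /andP[_ iK].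
    by rewrite muln1 /f (negbTE iK).
  lia.
have sigS : forall s, s \in S -> exists2 R, lsum f (nbhd e s) + R = F &
    (R = 0 -> {in K, forall w, e s w}).
  move=> s sS; exists (\sum_(i in K | i \notin nbhd e s) f i).
    rewrite /F [in RHS](bigID (fun i => i \in nbhd e s)) /= /lsum; congr (_ + _).
    apply: eq_bigl => i; case iN: (i \in nbhd e s); rewrite ?andbT ?andbF //.
    case/orP: (KS i) => // iS; move: iN; rewrite inE (negbTE (HS s i sS iS)) //.
  move=> R0 w wK; apply: contraT => nsw.
  move: R0; rewrite (bigD1 w) /=; last by rewrite wK inE nsw.
  by rewrite /f wK.
have KSedge : forall u s, u \in K -> s \in S -> e u s ->
    lsum f (nbhd e s) < lsum f (nbhd e u).
  move=> u s uK sS eus.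
  have sK : s \notin K by apply/negP => sK; exact: nKS s sK sS.
  have := sigK u uK; set a := \sum_(i in nbhd e u | i \notin K) 1 => Hu.
  have a1 : 1 <= a by rewrite /a (bigD1 s) //= inE eus sK.
  have fuk : f u <= k by have := fK u uK; lia.
  have : f u <= k * a by rewrite (leq_trans fuk) // leq_pmulr.
  case: (sigS s sS) => R HR HR0.
  case: (posnP R) => [R0|Rpos]; last by lia.
  have cl : {in s |: K &, forall x y, x != y -> e x y}.
    move=> x y; rewrite !inE => /orP[/eqP->|xK] /orP[/eqP->|yK] neq.
    - by rewrite eqxx in neq.
    - exact: HR0.
    - by rewrite sym; apply: HR0.
    - exact: HK.
  have := @clique_le _ _ _ _ cl colk; rewrite cardsU1 sK /= => Kk1.
  have fu : f u < k * a.
    by rewrite (leq_trans _ (leq_pmulr _ a1)) // (leq_ltn_trans (fK u uK)).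
  lia.
move=> u v euv.
case/orP: (KS u) => [uK|uS]; case/orP: (KS v) => [vK|vS].
- apply/eqP => Heq.
  have hu := sigK u uK; have hv := sigK v vK.
  have fu1 := fK u uK; have fv1 := fK v vK.
  have fuv : f u = f v.
    have pu : 0 < f u by rewrite /f uK.
    have pv : 0 < f v by rewrite /f vK.
    apply: (@modeq _ _ k (\sum_(i in nbhd e v | i \notin K) 1)
                  (\sum_(i in nbhd e u | i \notin K) 1)); [lia|lia|].
    rewrite Heq in hu; lia.
  move: fuv; rewrite /f uK vK => -[] /(congr1 (nth u (enum K))).
  rewrite !nth_index ?mem_enum // => uv; subst v.
  by rewrite irr in euv.
- by rewrite neq_ltn (KSedge u v uK vS euv) orbT.
- by rewrite neq_ltn (KSedge v u vK uS); last by rewrite sym.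
- by move: (HS u v uS vS); rewrite euv.
Qed.
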